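(* Let $\Omega:=\{(z_1,z_2)\in\mathbb{R}^2: z_1>0\}$ and define on $\Omega$ the vector fields \[ r_1(z_1,z_2)=\Big(\tfrac{z_2-\sqrt{z_2^2+4z_1}}{2},\,1\Big),\qquad r_2(z_1,z_2)=\Big(\tfrac{z_2+\sqrt{z_2^2+4z_1}}{2},\,1\Big). \] There exists a global diffeomorphism $w=(w_1,w_2):\Omega\to w(\Omega)\subset\mathbb{R}^2$ such that on $\Omega$, \[ \nabla w_i\cdot r_i=0\quad(i=1,2),\qquad \frac{\partial w_1}{\partial z_1}>0,\qquad \frac{\partial w_2}{\partial z_1}<0. \]
   Context: $r_1,r_2$ are the eigenvectors of the matrix $\begin{pmatrix} z_2 & z_1\\ 1 & 0\end{pmatrix}$ corresponding to the eigenvalues $\frac{z_2\mp\sqrt{z_2^2+4z_1}}{2}$. *)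

(* Defs.v *)
From Stdlib Require Import Reals.
From Coquelicot Require Import Coquelicot.
Open Scope R_scope.

Definition Omega (z : R * R) : Prop := 0 < fst z.

Definition lam1 (z1 z2 : R) : R := (z2 - sqrt (z2 ^ 2 + 4 * z1)) / 2.
Definition lam2 (z1 z2 : R) : R := (z2 + sqrt (z2 ^ 2 + 4 * z1)) / 2.
Definition r1 (z1 z2 : R) : R * R := (lam1 z1 z2, 1).
Definition r2 (z1 z2 : R) : R * R := (lam2 z1 z2, 1).

Definition pd1 (f : R -> R -> R) (x y : R) : R := Derive (fun t => f t y) x.
Definition pd2 (f : R -> R -> R) (x y : R) : R := Derive (fun t => f x t) y.

Definition grad_dot (f : R -> R -> R) (x y : R) (v : R * R) : R :=
  pd1 f x y * fst v + pd2 f x y * snd v.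

Definition C1_on (U : R * R -> Prop) (f : R -> R -> R) : Prop :=
  forall x y, U (x, y) ->
    ex_derive (fun t => f t y) x /\ ex_derive (fun t => f x t) y /\
    continuous (fun p : R * R => pd1 f (fst p) (snd p)) (x, y) /\
    continuous (fun p : R * R => pd2 f (fst p) (snd p)) (x, y).

Definition image2 (U : R * R -> Prop) (w1 w2 : R -> R -> R) (y : R * R) : Prop :=
  exists z, U z /\ y = (w1 (fst z) (snd z), w2 (fst z) (snd z)).

Definition diffeo_onto_image (U : R * R -> Prop) (w1 w2 : R -> R -> R) : Prop :=
  open U /\ C1_on U w1 /\ C1_on U w2 /\ open (image2 U w1 w2) /\
  exists g1 g2 : R -> R -> R,
    C1_on (image2 U w1 w2) g1 /\ C1_on (image2 U w1 w2) g2 /\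
    (forall z, U z ->
       g1 (w1 (fst z) (snd z)) (w2 (fst z) (snd z)) = fst z /\
       g2 (w1 (fst z) (snd z)) (w2 (fst z) (snd z)) = snd z) /\
    (forall y, image2 U w1 w2 y ->
       U (g1 (fst y) (snd y), g2 (fst y) (snd y)) /\
       w1 (g1 (fst y) (snd y)) (g2 (fst y) (snd y)) = fst y /\
       w2 (g1 (fst y) (snd y)) (g2 (fst y) (snd y)) = snd y).

(* Main.v *)
Require Import Defs.
From Stdlib Require Import Reals Lra.
From Coquelicot Require Import Coquelicot.
Open Scope R_scope.

Definition cst (c : R) : R -> R -> R := fun _ _ => c.
Definition X2 : R -> R -> R := fun x _ => x.
Definition Y2 : R -> R -> R := fun _ y => y.
Definition addF (f g : R -> R -> R) : R -> R -> R := fun x y => f x y + g x y.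
Definition mulF (f g : R -> R -> R) : R -> R -> R := fun x y => f x y * g x y.
Definition cmpF (h : R -> R) (f : R -> R -> R) : R -> R -> R := fun x y => h (f x y).

Definition SM (U : R * R -> Prop) (f fx fy : R -> R -> R) : Prop :=
  forall x y, U (x, y) ->
    is_derive (fun t => f t y) x (fx x y) /\ is_derive (fun t => f x t) y (fy x y) /\
    continuous (fun p : R * R => f (fst p) (snd p)) (x, y) /\
    continuous (fun p : R * R => fx (fst p) (snd p)) (x, y) /\
    continuous (fun p : R * R => fy (fst p) (snd p)) (x, y).

Lemma SM_cst U c : SM U (cst c) (cst 0) (cst 0).
Proof.
  intros x y _; unfold cst; refine (conj _ (conj _ (conj _ (conj _ _)))); try apply continuous_const;
  apply (is_derive_const c).
Qed.

Lemma SM_X U : SM U X2 (cst 1) (cst 0).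
Proof.
  intros x y _; unfold cst, X2; refine (conj _ (conj _ (conj _ (conj _ _)))); try apply continuous_const.
  - apply (is_derive_id x).
  - apply (is_derive_const x).
  - apply continuous_fst.
Qed.

Lemma SM_Y U : SM U Y2 (cst 0) (cst 1).
Proof.
  intros x y _; unfold cst, Y2; refine (conj _ (conj _ (conj _ (conj _ _)))); try apply continuous_const.
  - apply (is_derive_const y).
  - apply (is_derive_id y).
  - apply continuous_snd.
Qed.

Lemma SM_add U f fx fy g gx gy : SM U f fx fy -> SM U g gx gy ->
  SM U (addF f g) (addF fx gx) (addF fy gy).
Proof.
  intros Hf Hg x y H; destruct (Hf x y H) as (f1&f2&f3&f4&f5);
  destruct (Hg x y H) as (g1&g2&g3&g4&g5); unfold addF; refine (conj _ (conj _ (conj _ (conj _ _)))).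
  - apply (is_derive_plus (fun t => f t y) (fun t => g t y)); auto.
  - apply (is_derive_plus (fun t => f x t) (fun t => g x t)); auto.
  - apply (continuous_plus (fun p : R*R => f (fst p) (snd p)) (fun p : R*R => g (fst p) (snd p))); auto.
  - apply (continuous_plus (fun p : R*R => fx (fst p) (snd p)) (fun p : R*R => gx (fst p) (snd p))); auto.
  - apply (continuous_plus (fun p : R*R => fy (fst p) (snd p)) (fun p : R*R => gy (fst p) (snd p))); auto.
Qed.

Lemma cmul (f g : R * R -> R) p : continuous f p -> continuous g p ->
  continuous (fun q => f q * g q) p.
Proof. intros; apply (continuous_mult f g); auto. Qed.

Lemma SM_mul U f fx fy g gx gy : SM U f fx fy -> SM U g gx gy ->
  SM U (mulF f g) (addF (mulF fx g) (mulF f gx)) (addF (mulF fy g) (mulF f gy)).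
Proof.
  intros Hf Hg x y H; destruct (Hf x y H) as (f1&f2&f3&f4&f5);
  destruct (Hg x y H) as (g1&g2&g3&g4&g5); unfold addF, mulF; refine (conj _ (conj _ (conj _ (conj _ _)))).
  - apply (is_derive_mult (fun t => f t y) (fun t => g t y)); auto.
    intros; apply Rmult_comm.
  - apply (is_derive_mult (fun t => f x t) (fun t => g x t)); auto.
    intros; apply Rmult_comm.
  - apply cmul; auto.
  - apply (continuous_plus (fun p : R*R => fx (fst p) (snd p) * g (fst p) (snd p)) (fun p : R*R => f (fst p) (snd p) * gx (fst p) (snd p)));
    apply cmul; auto.
  - apply (continuous_plus (fun p : R*R => fy (fst p) (snd p) * g (fst p) (snd p)) (fun p : R*R => f (fst p) (snd p) * gy (fst p) (snd p)));
    apply cmul; auto.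
Qed.

Lemma SM_cmp U f fx fy (h h' : R -> R) : SM U f fx fy ->
  (forall x y, U (x, y) -> is_derive h (f x y) (h' (f x y)) /\ continuous h' (f x y)) ->
  SM U (cmpF h f) (mulF (cmpF h' f) fx) (mulF (cmpF h' f) fy).
Proof.
  intros Hf Hh x y H; destruct (Hf x y H) as (f1&f2&f3&f4&f5);
  destruct (Hh x y H) as [h1 h2]; unfold cmpF, mulF; refine (conj _ (conj _ (conj _ (conj _ _)))).
  - assert (K := is_derive_comp h (fun t => f t y) x _ _ h1 f1).
    replace (h' (f x y) * fx x y) with (fx x y * h' (f x y)) by ring; exact K.
  - assert (K := is_derive_comp h (fun t => f x t) y _ _ h1 f2).
    replace (h' (f x y) * fy x y) with (fy x y * h' (f x y)) by ring; exact K.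
  - refine (continuous_comp (fun p : R*R => f (fst p) (snd p)) h (x,y) f3 _).
    exact (ex_derive_continuous h (f x y) (ex_intro _ _ h1)).
  - apply cmul; auto. exact (continuous_comp (fun p : R*R => f (fst p) (snd p)) h' (x,y) f3 h2).
  - apply cmul; auto. exact (continuous_comp (fun p : R*R => f (fst p) (snd p)) h' (x,y) f3 h2).
Qed.

Lemma C1_of_SM U f fx fy : open U -> SM U f fx fy -> C1_on U f.
Proof.
  intros HU Hf x y H; destruct (Hf x y H) as (f1&f2&f3&f4&f5).
  refine (conj (ex_intro _ _ f1) (conj (ex_intro _ _ f2) (conj _ _))).
  - apply (continuous_ext_loc _ (fun p : R*R => fx (fst p) (snd p))); auto.
    apply (filter_imp U); [| apply HU; auto].
    intros [a b] Hab; destruct (Hf a b Hab) as (k1&_).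
    unfold pd1; simpl; symmetry; apply is_derive_unique; exact k1.
  - apply (continuous_ext_loc _ (fun p : R*R => fy (fst p) (snd p))); auto.
    apply (filter_imp U); [| apply HU; auto].
    intros [a b] Hab; destruct (Hf a b Hab) as (_&k1&_).
    unfold pd2; simpl; symmetry; apply is_derive_unique; exact k1.
Qed.

Lemma cont1 (h : R -> R) x : ex_derive h x -> continuous h x.
Proof. intros; apply (ex_derive_continuous h x); auto. Qed.

Lemma SM_sqrt U f fx fy : SM U f fx fy -> (forall x y, U (x, y) -> 0 < f x y) ->
  SM U (cmpF sqrt f) (mulF (cmpF (fun t => / (2 * sqrt t)) f) fx)
                     (mulF (cmpF (fun t => / (2 * sqrt t)) f) fy).
Proof.
  intros Hf Hp; apply SM_cmp; auto; intros x y H; specialize (Hp x y H).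
  split.
  - auto_derive; [lra| field]. apply Rgt_not_eq, sqrt_lt_R0; lra.
  - apply cont1. auto_derive. split; [lra|]. split; auto.
    apply Rgt_not_eq, Rmult_lt_0_compat; try lra; apply sqrt_lt_R0; lra.
Qed.

Lemma SM_exp U f fx fy : SM U f fx fy ->
  SM U (cmpF exp f) (mulF (cmpF exp f) fx) (mulF (cmpF exp f) fy).
Proof.
  intros Hf; apply SM_cmp; auto; intros x y H; split.
  - auto_derive; auto; ring.
  - apply cont1; auto_derive; auto.
Qed.

Lemma SM_ln U f fx fy : SM U f fx fy -> (forall x y, U (x, y) -> 0 < f x y) ->
  SM U (cmpF ln f) (mulF (cmpF Rinv f) fx) (mulF (cmpF Rinv f) fy).
Proof.
  intros Hf Hp; apply SM_cmp; auto; intros x y H; specialize (Hp x y H); split.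
  - auto_derive; auto; field; lra.
  - apply cont1; auto_derive; lra.
Qed.

Lemma SM_inv U f fx fy : SM U f fx fy -> (forall x y, U (x, y) -> f x y <> 0) ->
  SM U (cmpF Rinv f) (mulF (cmpF (fun t => - / (t * t)) f) fx)
                     (mulF (cmpF (fun t => - / (t * t)) f) fy).
Proof.
  intros Hf Hp; apply SM_cmp; auto; intros x y H; specialize (Hp x y H); split.
  - auto_derive; auto; field; auto.
  - apply cont1; auto_derive; apply Rmult_integral_contrapositive; auto.
Qed.

Lemma SM_atan U f fx fy : SM U f fx fy ->
  SM U (cmpF atan f) (mulF (cmpF (fun t => / (1 + t * t)) f) fx)
                     (mulF (cmpF (fun t => / (1 + t * t)) f) fy).
Proof.
  intros Hf; apply SM_cmp; auto; intros x y H; split.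
  - auto_derive; auto. unfold Rsqr. field. nra.
  - apply cont1; auto_derive. nra.
Qed.

Lemma SM_sin U f fx fy : SM U f fx fy ->
  SM U (cmpF sin f) (mulF (cmpF cos f) fx) (mulF (cmpF cos f) fy).
Proof.
  intros Hf; apply SM_cmp; auto; intros x y H; split.
  - auto_derive; auto; ring.
  - apply cont1; auto_derive; auto.
Qed.

Lemma SM_cos U f fx fy : SM U f fx fy ->
  SM U (cmpF cos f) (mulF (cmpF (fun t => - sin t) f) fx) (mulF (cmpF (fun t => - sin t) f) fy).
Proof.
  intros Hf; apply SM_cmp; auto; intros x y H; split.
  - auto_derive; auto; ring.
  - apply cont1; auto_derive; auto.
Qed.

Definition sW := cmpF sqrt (addF (mulF Y2 Y2) (mulF (cst 4) X2)).
Definition pW := cmpF sqrt (mulF (addF sW (mulF (cst (-1)) Y2)) (cst (/2))).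
Definition qW := cmpF sqrt (mulF (addF sW Y2) (cst (/2))).
Definition w1 := mulF (addF sW (mulF (cst 2) Y2)) pW.
Definition w2 := mulF (addF (mulF (cst 2) Y2) (mulF (cst (-1)) sW)) qW.

Lemma sfacts x y : 0 < x -> let s := sqrt (y*y+4*x) in
  0 < s /\ s * s = y*y+4*x /\ y < s /\ - y < s.
Proof.
  intros Hx s. assert (Hs : s * s = y*y+4*x) by (apply sqrt_sqrt; nra).
  assert (0 <= s) by apply sqrt_pos.
  repeat split; nra.
Qed.

Ltac smt := repeat match goal with
 | |- SM _ (mulF _ _) _ _ => eapply SM_mul
 | |- SM _ (addF _ _) _ _ => eapply SM_add
 | |- SM _ (cmpF sqrt _) _ _ => eapply SM_sqrt
 | |- SM _ (cmpF ln _) _ _ => eapply SM_ln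
 | |- SM _ (cmpF exp _) _ _ => eapply SM_exp
 | |- SM _ (cmpF Rinv _) _ _ => eapply SM_inv
 | |- SM _ (cmpF atan _) _ _ => eapply SM_atan
 | |- SM _ (cmpF sin _) _ _ => eapply SM_sin
 | |- SM _ (cmpF cos _) _ _ => eapply SM_cos
 | |- SM _ X2 _ _ => apply SM_X
 | |- SM _ Y2 _ _ => apply SM_Y
 | |- SM _ (cst _) _ _ => apply SM_cst
 end.

Lemma SM_w1 : exists fx fy, SM Omega w1 fx fy.
Proof.
  do 2 eexists; unfold w1, pW, sW; smt; unfold Omega; simpl; intros x y H;
  destruct (sfacts x y H) as (?&?&?&?); unfold addF, mulF, cmpF, cst, X2, Y2; nra.
Qed.
Lemma SM_w2 : exists fx fy, SM Omega w2 fx fy.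
Proof.
  do 2 eexists; unfold w2, qW, sW; smt; unfold Omega; simpl; intros x y H;
  destruct (sfacts x y H) as (?&?&?&?); unfold addF, mulF, cmpF, cst, X2, Y2; nra.
Qed.

Lemma pfacts x y : 0 < x -> let s := sqrt (y*y+4*x) in
  let p := sqrt ((s + -1 * y) * /2) in let q := sqrt ((s + y) * /2) in
  0 < p /\ p * p = (s + -1 * y) * /2 /\ 0 < q /\ q * q = (s+y) * /2.
Proof.
  intros Hx s p q. destruct (sfacts x y Hx) as (?&?&?&?); fold s in H, H0, H1, H2.
  repeat split.
  - apply sqrt_lt_R0; lra.
  - apply sqrt_sqrt; lra.
  - apply sqrt_lt_R0; lra.
  - apply sqrt_sqrt; lra.
Qed.

Lemma dw1x x y : 0 < x -> let p := sqrt ((sqrt (y*y+4*x) + -1 * y) * /2) in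
  is_derive (fun t => w1 t y) x (3 / (2 * p)).
Proof.
  intros Hx; cbv zeta. destruct (sfacts x y Hx) as (?&?&?&?). destruct (pfacts x y Hx) as (?&?&?&?).
  unfold w1, pW, sW, mulF, addF, cmpF, cst, X2, Y2. auto_derive.
  - repeat split; nra.
  - set (s := sqrt (y*y+4*x)) in *. set (p := sqrt ((s + -1*y)*/2)) in *.
    replace s with (2*p*p+y) by lra. field; nra.
Qed.

Lemma dw1y x y : 0 < x -> let p := sqrt ((sqrt (y*y+4*x) + -1 * y) * /2) in
  is_derive (fun t => w1 x t) y (3 * p / 2).
Proof.
  intros Hx; cbv zeta. destruct (sfacts x y Hx) as (?&?&?&?). destruct (pfacts x y Hx) as (?&?&?&?).
  unfold w1, pW, sW, mulF, addF, cmpF, cst, X2, Y2. auto_derive.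
  - repeat split; nra.
  - set (s := sqrt (y*y+4*x)) in *. set (p := sqrt ((s + -1*y)*/2)) in *.
    replace s with (2*p*p+y) by lra. field; nra.
Qed.

Lemma dw2x x y : 0 < x -> let q := sqrt ((sqrt (y*y+4*x) + y) * /2) in
  is_derive (fun t => w2 t y) x (- 3 / (2 * q)).
Proof.
  intros Hx; cbv zeta. destruct (sfacts x y Hx) as (?&?&?&?). destruct (pfacts x y Hx) as (?&?&?&?).
  unfold w2, qW, sW, mulF, addF, cmpF, cst, X2, Y2. auto_derive.
  - repeat split; nra.
  - set (s := sqrt (y*y+4*x)) in *. set (q := sqrt ((s + y)*/2)) in *.
    replace s with (2*q*q-y) by lra. field; nra.
Qed.

Lemma dw2y x y : 0 < x -> let q := sqrt ((sqrt (y*y+4*x) + y) * /2) in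
  is_derive (fun t => w2 x t) y (3 * q / 2).
Proof.
  intros Hx; cbv zeta. destruct (sfacts x y Hx) as (?&?&?&?). destruct (pfacts x y Hx) as (?&?&?&?).
  unfold w2, qW, sW, mulF, addF, cmpF, cst, X2, Y2. auto_derive.
  - repeat split; nra.
  - set (s := sqrt (y*y+4*x)) in *. set (q := sqrt ((s + y)*/2)) in *.
    replace s with (2*q*q-y) by lra. field; nra.
Qed.

Definition DD (z : R * R) : Prop := 0 < fst z \/ snd z < 0.
Definition R2 := addF (mulF X2 X2) (mulF Y2 Y2).
Definition rG := cmpF sqrt R2.
Definition tG := mulF X2 (cmpF Rinv (addF rG (mulF (cst (-1)) Y2))).
Definition th2 := addF (cst (2*PI/3)) (mulF (cst (-4/3)) (cmpF atan tG)).
Definition rho2 := cmpF exp (mulF (cst (/3)) (cmpF ln R2)).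
Definition g1 := mulF (mulF (mulF rho2 rho2) (cst (/4))) (mulF (cmpF sin th2) (cmpF sin th2)).
Definition g2 := mulF rho2 (cmpF cos th2).

Lemma Dfacts a b : (0 < a \/ b < 0) -> let r := sqrt (a*a+b*b) in
  0 < r /\ r * r = a*a+b*b /\ b < r /\ 0 < a + r - b.
Proof.
  intros Ha r. assert (0 < a*a+b*b) by (destruct Ha; nra).
  assert (Hs : r * r = a*a+b*b) by (apply sqrt_sqrt; nra).
  assert (0 < r) by (apply sqrt_lt_R0; auto).
  assert (b < r) by (destruct Ha; nra).
  repeat split; auto. destruct Ha; nra.
Qed.

Lemma SM_g1 : exists fx fy, SM DD g1 fx fy.
Proof.
  do 2 eexists; unfold g1, rho2, th2, tG, rG, R2; smt; unfold DD; simpl; intros x y H;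
  destruct (Dfacts x y H) as (?&?&?&?); unfold addF, mulF, cmpF, cst, X2, Y2; nra.
Qed.
Lemma SM_g2 : exists fx fy, SM DD g2 fx fy.
Proof.
  do 2 eexists; unfold g2, rho2, th2, tG, rG, R2; smt; unfold DD; simpl; intros x y H;
  destruct (Dfacts x y H) as (?&?&?&?); unfold addF, mulF, cmpF, cst, X2, Y2; nra.
Qed.

Lemma t2lem a b r : r * r = a*a+b*b -> 0 < r - b -> 0 < r ->
  1 + (a/(r-b))*(a/(r-b)) = 2*r/(r-b).
Proof.
  intros H1 H2 H3. replace ((a/(r-b))*(a/(r-b))) with ((a*a)/((r-b)*(r-b))) by (field; lra).
  replace (a*a) with (r*r-b*b) by lra. field; lra.
Qed.

Lemma wg a b : DD (a,b) -> Omega (g1 a b, g2 a b) /\ w1 (g1 a b) (g2 a b) = a /\ w2 (g1 a b) (g2 a b) = b.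
Proof.
  intro H. unfold DD in H; simpl in H. destruct (Dfacts a b H) as (Hr0&Hr2&Hrb&Har).
  set (r := sqrt (a*a+b*b)) in *.
  set (t := a / (r - b)).
  assert (Ht1 : -1 < t).
  { assert (E : t + 1 = (a + r - b) * / (r - b)) by (unfold t; field; lra).
    assert (0 < (a + r - b) * / (r - b)); [|lra].
    apply Rmult_lt_0_compat; [lra| apply Rinv_0_lt_compat; lra]. }
  set (be := atan t).
  assert (Hbe : - (PI/4) < be < PI/2).
  { split; [| apply atan_bound]. rewrite <- atan_1, <- atan_opp. apply atan_increasing; lra. }
  assert (HPI := PI_RGT_0).
  set (th := PI/3 - 2/3*be).
  assert (Hth : 0 < th < PI/2) by (unfold th; lra).
  assert (Eth2 : th2 a b = 2 * th).
  { change (th2 a b) with (2*PI/3 + -4/3 * atan (a * / (sqrt (a*a+b*b) + -1*b))).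
    fold r. replace (r + -1*b) with (r - b) by ring. fold (a / (r - b)). fold t be. unfold th; field. }
  set (m := exp (/3 * ln (a*a+b*b))).
  assert (Hm0 : 0 < m) by apply exp_pos.
  assert (Hm3 : m * m * m = r * r).
  { unfold m; rewrite <- !exp_plus. replace (/3 * ln (a*a+b*b) + /3 * ln (a*a+b*b) + /3 * ln (a*a+b*b)) with (ln (a*a+b*b)) by field.
    rewrite exp_ln; nra. }
  set (rho := sqrt m).
  assert (Hrho : rho * rho = m) by (apply sqrt_sqrt; lra).
  assert (Hrho0 : 0 < rho) by (apply sqrt_lt_R0; lra).
  assert (Hrho3 : rho * rho * rho = r).
  { assert (E : (rho*rho*rho)*(rho*rho*rho) = r * r) by (rewrite <- Hm3, <- Hrho; ring).
    assert (0 < rho*rho*rho) by (repeat apply Rmult_lt_0_compat; auto).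
    set (X := rho*rho*rho) in *. assert (E2 : (X - r) * (X + r) = 0) by (ring_simplify; lra).
    destruct (Rmult_integral _ _ E2); lra. }
  set (u := sin th). set (v := cos th).
  assert (Hu : 0 < u) by (apply sin_gt_0; lra).
  assert (Hv : 0 < v) by (apply cos_gt_0; lra).
  assert (Huv : u*u + v*v = 1).
  { unfold u, v. rewrite <- (sin2_cos2 th). unfold Rsqr; ring. }
  assert (Eg1 : g1 a b = m*m*u*u*v*v).
  { change (g1 a b) with (m*m*/4 * (sin (th2 a b) * sin (th2 a b))). rewrite Eth2, sin_2a. fold u v. field. }
  assert (Eg2 : g2 a b = m*(v*v-u*u)).
  { change (g2 a b) with (m * cos (th2 a b)). rewrite Eth2, cos_2a. fold u v. ring. }
  assert (E3 : 3 * th = PI - 2 * be) by (unfold th; field).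
  assert (Es3 : sin (3*th) = u*(3*v*v - u*u)).
  { replace (3*th) with (2*th + th) by ring. rewrite sin_plus, sin_2a, cos_2a. fold u v. ring. }
  assert (Ec3 : cos (3*th) = v*(v*v - 3*u*u)).
  { replace (3*th) with (2*th + th) by ring. rewrite cos_plus, sin_2a, cos_2a. fold u v.
    replace (u*u) with (1 - v*v) at 2 3 by lra. ring. }
  assert (Hsq : sqrt (1 + t²) * sqrt (1 + t²) = 1 + t*t) by (apply sqrt_sqrt; unfold Rsqr; nra).
  assert (Hsq0 : 0 < sqrt (1 + t²)) by (apply sqrt_lt_R0; unfold Rsqr; nra).
  assert (Hsb : sin (2*be) = 2*t/(1+t*t)).
  { rewrite sin_2a. unfold be; rewrite sin_atan, cos_atan. rewrite <- Hsq. field. lra. }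
  assert (Hcb : cos (2*be) = (1-t*t)/(1+t*t)).
  { rewrite cos_2a. unfold be; rewrite sin_atan, cos_atan. rewrite <- Hsq. field. lra. }
  assert (Et : 1 + t*t = 2*r/(r-b)) by (apply t2lem; lra).
  assert (Ka : r * (2*t/(1+t*t)) = a) by (rewrite Et; unfold t; field; lra).
  assert (Kb : r * (-((1-t*t)/(1+t*t))) = b).
  { replace (1 - t*t) with (2 - (1 + t*t)) by ring. rewrite Et. unfold t; field; lra. }
  rewrite E3, sin_PI_x, Hsb in Es3. rewrite E3, Rtrigo_facts.cos_pi_minus, Hcb in Ec3.
  assert (Hs : sqrt (g2 a b * g2 a b + 4 * g1 a b) = m).
  { apply sqrt_lem_1; try nra. rewrite Eg1, Eg2.
    replace (m * (v * v - u * u) * (m * (v * v - u * u)) + 4 * (m * m * u * u * v * v))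
      with (m*m*((u*u+v*v)*(u*u+v*v))) by ring. rewrite Huv; ring. }
  assert (Hp : sqrt ((m + -1 * g2 a b) * / 2) = rho * u).
  { apply sqrt_lem_1; try nra; rewrite Eg2, <- Hrho; replace (v*v) with (1 - u*u) by lra; field. }
  assert (Hq : sqrt ((m + g2 a b) * / 2) = rho * v).
  { apply sqrt_lem_1; try nra; rewrite Eg2, <- Hrho; replace (u*u) with (1 - v*v) by lra; field. }
  split; [| split].
  - unfold Omega; simpl. rewrite Eg1. repeat apply Rmult_lt_0_compat; auto.
  - change (w1 (g1 a b) (g2 a b)) with ((sqrt (g2 a b * g2 a b + 4 * g1 a b) + 2 * g2 a b) *
       sqrt ((sqrt (g2 a b * g2 a b + 4 * g1 a b) + -1 * g2 a b) * /2)).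
    rewrite Hs, Hp, Eg2, <- Ka, Es3, <- Hrho3, <- Hrho.
    replace (3*v*v) with (3*(v*v)) by ring. replace (v*v) with (1 - u*u) by lra. ring.
  - change (w2 (g1 a b) (g2 a b)) with ((2 * g2 a b + -1 * sqrt (g2 a b * g2 a b + 4 * g1 a b)) *
       sqrt ((sqrt (g2 a b * g2 a b + 4 * g1 a b) + g2 a b) * /2)).
    rewrite Hs, Hq, Eg2, <- Kb, Ec3, <- Hrho3, <- Hrho.
    replace (3*u*u) with (3*(u*u)) by ring. replace (u*u) with (1 - v*v) by lra. ring.
Qed.

Lemma w_pq x y : 0 < x -> let s := sqrt (y*y+4*x) in
  let p := sqrt ((s + -1 * y) * /2) in let q := sqrt ((s + y) * /2) in
  x = p*p*(q*q) /\ y = q*q - p*p /\ w1 x y = (3*(q*q) - p*p)*p /\ w2 x y = (q*q-3*(p*p))*q.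
Proof.
  intros Hx; cbv zeta. destruct (sfacts x y Hx) as (?&?&?&?). destruct (pfacts x y Hx) as (?&?&?&?).
  change (w1 x y) with ((sqrt (y*y+4*x) + 2*y) * sqrt ((sqrt (y*y+4*x) + -1 * y) * /2)).
  change (w2 x y) with ((2*y + -1*sqrt (y*y+4*x)) * sqrt ((sqrt (y*y+4*x) + y) * /2)).
  set (s := sqrt (y*y+4*x)) in *. set (p := sqrt ((s + -1 * y) * /2)) in *.
  set (q := sqrt ((s + y) * /2)) in *.
  rewrite H4, H6. split; [|split; [|split]].
  - replace ((s + -1 * y) * / 2 * ((s + y) * / 2)) with ((s*s - y*y)/4) by field. rewrite H0. field.
  - field.
  - field.
  - field.
Qed.

Lemma inj p q p' q' : 0 < p -> 0 < q -> 0 < p' -> 0 < q' ->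
  (3*(q*q) - p*p)*p = (3*(q'*q') - p'*p')*p' -> (q*q-3*(p*p))*q = (q'*q'-3*(p'*p'))*q' ->
  p = p' /\ q = q'.
Proof.
  intros H1 H2 H3 H4 Ea Eb.
  set (dq := q - q'). set (dp := p - p').
  set (mr := q*q - p*p + (q*q' - p*p') + (q'*q' - p'*p')).
  set (mi := 2*q*p + (q*p' + p*q') + 2*q'*p').
  assert (R1 : dq*mr - dp*mi = 0) by (unfold dq, mr, dp, mi; nra).
  assert (R2 : dq*mi + dp*mr = 0) by (unfold dq, mr, dp, mi; nra).
  assert (Hmi : 0 < mi) by (unfold mi; nra).
  assert (E : (dq*dq + dp*dp) * mi = 0).
  { replace ((dq*dq + dp*dp) * mi) with (dq*(dq*mi + dp*mr) - dp*(dq*mr - dp*mi)) by ring.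
    rewrite R1, R2; ring. }
  destruct (Rmult_integral _ _ E) as [E'|E']; [|lra].
  assert (dq = 0 /\ dp = 0) by nra. unfold dq, dp in *; lra.
Qed.

Lemma w_inj x y x' y' : 0 < x -> 0 < x' -> w1 x y = w1 x' y' -> w2 x y = w2 x' y' -> x = x' /\ y = y'.
Proof.
  intros Hx Hx' E1 E2.
  destruct (w_pq x y Hx) as (A1&A2&A3&A4). destruct (w_pq x' y' Hx') as (B1&B2&B3&B4).
  destruct (pfacts x y Hx) as (P1&_&Q1&_). destruct (pfacts x' y' Hx') as (P2&_&Q2&_).
  rewrite A3, B3 in E1. rewrite A4, B4 in E2.
  destruct (inj _ _ _ _ P1 Q1 P2 Q2 E1 E2) as [Ep Eq].
  split; [rewrite A1, B1 | rewrite A2, B2]; rewrite Ep, Eq; reflexivity.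
Qed.

Lemma w_DD x y : 0 < x -> DD (w1 x y, w2 x y).
Proof.
  intros Hx. destruct (sfacts x y Hx) as (?&?&?&?). destruct (pfacts x y Hx) as (?&?&?&?).
  unfold DD; simpl. change (w1 x y) with ((sqrt (y*y+4*x) + 2*y) * sqrt ((sqrt (y*y+4*x) + -1 * y) * /2)).
  change (w2 x y) with ((2*y + -1*sqrt (y*y+4*x)) * sqrt ((sqrt (y*y+4*x) + y) * /2)).
  set (s := sqrt (y*y+4*x)) in *.
  destruct (Rlt_or_le 0 (s + 2*y)).
  - left; apply Rmult_lt_0_compat; auto.
  - right. assert (2*y + -1*s < 0) by lra. nra.
Qed.

Lemma open_Omega : open Omega.
Proof.
  unfold Omega. apply (open_comp fst (fun u => 0 < u)); [| apply open_gt].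
  intros [a b] _; apply continuous_fst.
Qed.

Lemma open_DD : open DD.
Proof.
  unfold DD. apply open_or.
  - apply (open_comp fst (fun u => 0 < u)); [| apply open_gt].
    intros [a b] _; apply continuous_fst.
  - apply (open_comp snd (fun u => u < 0)); [| apply open_lt].
    intros [a b] _; apply continuous_snd.
Qed.

Lemma img_DD y : image2 Omega w1 w2 y <-> DD y.
Proof.
  split.
  - intros [[x1 x2] [Hz ->]]. apply w_DD. exact Hz.
  - intros H. destruct y as [a b]. destruct (wg a b H) as (H1&H2&H3).
    exists (g1 a b, g2 a b). split; auto. simpl. rewrite H2, H3; reflexivity.
Qed.

Lemma C1_mono U V f : C1_on U f -> (forall p, V p -> U p) -> C1_on V f.
Proof. intros H HV x y Hv; apply H, HV, Hv. Qed.

Theorem lemma3p1 :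
  exists w1 w2 : R -> R -> R,
    diffeo_onto_image Omega w1 w2 /\
    (forall z1 z2, Omega (z1, z2) ->
       grad_dot w1 z1 z2 (r1 z1 z2) = 0 /\
       grad_dot w2 z1 z2 (r2 z1 z2) = 0 /\
       pd1 w1 z1 z2 > 0 /\
       pd1 w2 z1 z2 < 0).
Proof.
  exists w1, w2. split.
  - destruct SM_w1 as (f1x&f1y&S1). destruct SM_w2 as (f2x&f2y&S2).
    destruct SM_g1 as (h1x&h1y&T1). destruct SM_g2 as (h2x&h2y&T2).
    split; [apply open_Omega|]. split; [eapply C1_of_SM; [apply open_Omega|eauto]|].
    split; [eapply C1_of_SM; [apply open_Omega|eauto]|].
    split; [apply (open_ext DD); [intros; symmetry; apply img_DD | apply open_DD]|].
    exists g1, g2. split; [|split; [|split]].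
    + apply (C1_mono DD); [eapply C1_of_SM; [apply open_DD|eauto]|]. intros; apply img_DD; auto.
    + apply (C1_mono DD); [eapply C1_of_SM; [apply open_DD|eauto]|]. intros; apply img_DD; auto.
    + intros [x y] Hz. unfold Omega in Hz; simpl in Hz |- *.
      assert (HD := w_DD x y Hz). destruct (wg _ _ HD) as (K1&K2&K3).
      unfold Omega in K1; simpl in K1.
      destruct (w_inj _ _ _ _ K1 Hz K2 K3) as [E1 E2]. split; auto.
    + intros [a b] Hy. apply img_DD in Hy. destruct (wg a b Hy) as (K1&K2&K3). simpl. auto.
  - intros x y Hx. unfold Omega in Hx; simpl in Hx.
    destruct (pfacts x y Hx) as (P0&P2&Q0&Q2).
    assert (E1x : pd1 w1 x y = 3 / (2 * sqrt ((sqrt (y*y+4*x) + -1 * y) * /2)))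
      by (unfold pd1; apply is_derive_unique, (dw1x x y Hx)).
    assert (E1y : pd2 w1 x y = 3 * sqrt ((sqrt (y*y+4*x) + -1 * y) * /2) / 2)
      by (unfold pd2; apply is_derive_unique, (dw1y x y Hx)).
    assert (E2x : pd1 w2 x y = - 3 / (2 * sqrt ((sqrt (y*y+4*x) + y) * /2)))
      by (unfold pd1; apply is_derive_unique, (dw2x x y Hx)).
    assert (E2y : pd2 w2 x y = 3 * sqrt ((sqrt (y*y+4*x) + y) * /2) / 2)
      by (unfold pd2; apply is_derive_unique, (dw2y x y Hx)).
    unfold grad_dot, r1, r2, lam1, lam2; cbn [fst snd].
    rewrite E1x, E1y, E2x, E2y.
    replace (y^2 + 4*x) with (y*y+4*x) by ring.
    set (s := sqrt (y*y+4*x)) in *. set (p := sqrt ((s + -1 * y) * /2)) in *.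
    set (q := sqrt ((s + y) * /2)) in *.
    split; [|split; [|split]].
    + replace ((y - s)/2) with (- (p*p)) by lra. field; lra.
    + replace ((y + s)/2) with (q*q) by lra. field; lra.
    + apply Rlt_gt; unfold Rdiv; apply Rmult_lt_0_compat; [lra|apply Rinv_0_lt_compat; lra].
    + unfold Rdiv. assert (0 < / (2*q)) by (apply Rinv_0_lt_compat; lra). nra.
Qed.
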